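(* In the setting below, for $\ell\ge1$ define $q_\ell:D_\ell(G^* )\otimes\bigwedge^{n+\ell}F\to\bigwedge^\ell U$ by $$g_1^{*(\alpha_1)}\cdots g_n^{*(\alpha_n)}\otimes f_{\tau_1}\wedge\cdots\wedge f_{\tau_\ell}\wedge f_\sigma\ \mapsto\ \sum_{L\in\mathcal L_{\alpha,\tau}}e_{L_1}\wedge\cdots\wedge e_{L_\ell}$$ for every $\tau=(\tau_1<\cdots<\tau_\ell)$ with $\tau\cap\sigma=\varnothing$ and $|\alpha|=\ell$, and sending every basis element $g^{*(\alpha)}\otimes f_\rho$ with $\rho\not\supseteq\sigma$ to $0$. Then for every $\ell\ge2$, $m_\ell\circ q_\ell=q_{\ell-1}\circ\partial_{\ell+1}$, where $\partial_{\ell+1}:D_\ell(G^* )\otimes\bigwedge^{n+\ell}F\to D_{\ell-1}(G^* )\otimes\bigwedge^{n+\ell-1}F$ is the Eagon–Northcott differential and $m_\ell:\bigwedge^\ell U\to\bigwedge^{\ell-1}U$ is the Koszul differential.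
   Context: Setting: $R=k[x_{ij}\mid1\le i\le n,1\le j\le m]$ over a field $k$, $n\le m$, $M=(x_{ij})$ generic, viewed as $F\to G$ with bases $f_1,\dots,f_m$ of $F$, $g_1,\dots,g_n$ of $G$, dual basis $g_i^*$ of $G^*$. $D_\ell(G^* )$ is the $\ell$th divided power, with basis $g^{*(\alpha)}=g_1^{*(\alpha_1)}\cdots g_n^{*(\alpha_n)}$, $|\alpha|=\ell$. For $\rho=(\rho_1<\dots<\rho_p)$, $f_\rho=f_{\rho_1}\wedge\cdots\wedge f_{\rho_p}$. Fix $\sigma=(\sigma_1<\dots<\sigma_n)$. The Eagon–Northcott complex $E_\bullet$ has $E_0=R$, $E_1=\bigwedge^nF$, $E_{\ell+1}=D_\ell(G^* )\otimes\bigwedge^{n+\ell}F$; $\partial_1(f_\rho)=\det$ of the columns $\rho$ of $M$, and for $\ell\ge1$, $\partial_{\ell+1}(g^{*(\alpha)}\otimes f_{\rho_1}\wedge\cdots\wedge f_{\rho_p})=\sum_{i:\alpha_i>0}\sum_{s=1}^p(-1)^{s+1}x_{i\rho_s}\,g^{*(\alpha-\varepsilon_i)}\otimes f_{\rho_1}\wedge\cdots\widehat{f_{\rho_s}}\cdots\wedge f_{\rho_p}$ (with $D_0(G^* )=R$). $U$ is free with basis $e_{ij}$, $1\le i\le n$, $j\notin\sigma$; for a pair $L=(i,j)$, $e_L=e_{ij}$; $m_\ell(e_{L_1}\wedge\cdots\wedge e_{L_\ell})=\sum_s(-1)^{s+1}x_{L_s}e_{L_1}\wedge\cdots\widehat{e_{L_s}}\cdots\wedge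 e_{L_\ell}$ where $x_{(i,j)}=x_{ij}$. For $\tau=(\tau_1<\dots<\tau_\ell)$ and $\alpha\in\mathbb Z^n_{\ge0}$, $\mathcal L_{\alpha,\tau}$ is the set of sets $\{(r_1,\tau_1),\dots,(r_\ell,\tau_\ell)\}$ with $r_s\in\{i:\alpha_i\ne0\}$ and $|\{s: r_s=j\}|=\alpha_j$ for all $j$; its elements are written $L=(L_1,\dots,L_\ell)$ with $L_s=(r_s,\tau_s)$ ordered by $\tau$. *)

(* Defs.v *)
From HB Require Import structures.
From mathcomp Require Import all_boot all_order all_algebra.
From mathcomp Require Import mpoly.
Set Implicit Arguments. Unset Strict Implicit. Unset Printing Implicit Defensive.
Import Order.TTheory GRing.Theory.
Local Open Scope ring_scope.

(* Free modules with a finite basis B are represented by coordinate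
   functions B -> R; an R-linear map between free modules with bases B, C
   is given by its coefficient matrix M : B -> C -> R, where M b c is the
   coefficient of the basis vector c in the image of the basis vector b. *)
Definition lin (R : comNzRingType) (B C : finType) (M : B -> C -> R)
  (v : B -> R) : C -> R := fun c => \sum_(b : B) v b * M b c.

Section Complexes.
Variables (n m : nat).

(* Basis of D_l(G^* ) (x) /\^{n+l} F : pairs (alpha, rho), alpha an exponent
   vector with |alpha| = l (entries are <= l), rho an (n+l)-subset of the
   columns, f_rho = f_{rho_1} /\ ... /\ f_{rho_p} with rho increasing. *)
Definition ENbasis (l : nat) :=
  {p : {ffun 'I_n -> 'I_l.+1} * {set 'I_m} |
     ((\sum_(i < n) (p.1 i : nat))%N == l) && (#|p.2| == n + l)%N}.

(* The Eagon--Northcott differential d_{l+1} : E_{l+1} -> E_l (l >= 1):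
   g^(alpha) (x) f_rho |-> sum_{i : alpha_i > 0} sum_s (-1)^(s+1) x_{i rho_s}
   g^(alpha - eps_i) (x) f_{rho \ rho_s};  (-1)^(s+1) = (-1)^#{r in rho | r < rho_s}. *)
Definition ENdiff (R : comNzRingType) (x : 'I_n -> 'I_m -> R) (l : nat)
  : ENbasis l -> ENbasis l.-1 -> R :=
  fun b c =>
    let a := (val b).1 in let rho := (val b).2 in
    let be := (val c).1 in let rho' := (val c).2 in
    \sum_(i < n) \sum_(j in rho)
      if [&& (0 < a i)%N,
             [forall k, (be k : nat) == (a k - (k == i))%N]
           & rho' == rho :\ j]
      then (-1) ^+ #|[set r in rho | (r < j)%N]| * x i j
      else 0.

(* U has basis e_ij, j notin sigma. Basis of /\^l U: l-subsets S of these
   pairs, e_S being the wedge of its elements listed in the (fixed)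
   column-major order below. *)
Definition pairlt (p q : 'I_n * 'I_m) : bool :=
  (p.2 < q.2)%N || ((p.2 == q.2) && (p.1 < q.1)%N).

Definition KUbasis (sigma : {set 'I_m}) (l : nat) :=
  {S : {set 'I_n * 'I_m} | (#|S| == l)%N && [forall p in S, p.2 \notin sigma]}.

Definition koszul (R : comNzRingType) (x : 'I_n -> 'I_m -> R)
  (sigma : {set 'I_m}) (l : nat) : KUbasis sigma l -> KUbasis sigma l.-1 -> R :=
  fun S S' =>
    \sum_(p in val S)
      if val S' == val S :\ p
      then (-1) ^+ #|[set q in val S | pairlt q p]| * x p.1 p.2
      else 0.

(* Number of inversions of a sequence of column indices; for distinct
   entries, f_{s_1} /\ ... /\ f_{s_p} = (-1)^(inversions s) f_{sorted s}. *)
Fixpoint inversions (s : seq 'I_m) : nat :=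
  if s is a :: s' then (count (fun b : 'I_m => (b < a)%N) s' + inversions s')%N
  else 0%N.

Definition wedge_sign (R : comNzRingType) (s : seq 'I_m) : R :=
  (-1) ^+ inversions s.

(* Membership of S in L_{alpha,tau}: S = {(r_s, tau_s)} with r_s in supp alpha
   and |{s : r_s = i}| = alpha_i for all i (r indexed by the columns of tau). *)
Definition in_L (l : nat) (a : {ffun 'I_n -> 'I_l.+1}) (tau : {set 'I_m})
  (S : {set 'I_n * 'I_m}) : bool :=
  [exists r : {ffun 'I_m -> 'I_n},
    [&& S == [set (r j, j) | j in tau],
        [forall j in tau, (a (r j) : nat) != 0%N]
      & [forall i, #|[set j in tau | r j == i]| == (a i : nat)]]].

(* On the sorted basis vector f_rho (rho = tau u sigma) we have
   f_rho = eps * (f_tau /\ f_sigma) with eps = wedge_sign (tau ++ sigma) = eps^-1. *)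
Definition qmap (R : comNzRingType) (sigma : {set 'I_m}) (l : nat)
  : ENbasis l -> KUbasis sigma l -> R :=
  fun b S =>
    let a := (val b).1 in let rho := (val b).2 in
    if sigma \subset rho then
      wedge_sign R (enum (rho :\: sigma) ++ enum sigma)
        * (in_L a (rho :\: sigma) (val S))%:R
    else 0.

End Complexes.

Definition xgen (k : fieldType) (n m : nat) : 'I_n -> 'I_m -> {mpoly k[n * m]} :=
  fun i j => 'X_(mxvec_index i j).

(* Main.v *)
Require Import Defs.
From HB Require Import structures.
From mathcomp Require Import all_boot all_order all_algebra.
From mathcomp Require Import mpoly.
From mathcomp Require Import zify ring.
From Stdlib Require Import Lia.
Set Implicit Arguments. Unset Strict Implicit. Unset Printing Implicit Defensive.
Import Order.TTheory GRing.Theory.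
Local Open Scope ring_scope.

Section Inv.
Variable m : nat.

Lemma inversions_cat (s t : seq 'I_m) :
  inversions (s ++ t) = (inversions s + inversions t +
     \sum_(a <- s) count (fun b : 'I_m => (b < a)%N) t)%N.
Proof.
elim: s => [|a s IH] /=; first by rewrite big_nil addn0.
by rewrite big_cons count_cat IH; lia.
Qed.

Lemma inversions_sorted (s : seq 'I_m) :
  sorted (fun a b : 'I_m => (a < b)%N) s -> inversions s = 0%N.
Proof.
elim: s => [|a s IH] //= Hp.
rewrite IH ?(path_sorted Hp) // addn0.
have: all (fun b : 'I_m => (a < b)%N) s.
  by apply: (order_path_min _ Hp) => x y z; apply: ltn_trans.
elim: s {IH Hp} => [|c s IH] //= /andP[H1 H2].
by rewrite ltnNge (ltnW H1) /= IH.
Qed.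

Lemma enum_sorted (A : {set 'I_m}) : sorted (fun a b : 'I_m => (a < b)%N) (enum A).
Proof.
rewrite -deprecated_filter_index_enum.
apply: sorted_filter; first by move=> x y z; apply: ltn_trans.
have := iota_ltn_sorted 0 m.
rewrite -val_enum_ord sorted_map.
by rewrite enumT /index_enum; unlock.
Qed.
Lemma inv_setE (A sigma : {set 'I_m}) : inversions (enum A ++ enum sigma)
  = (\sum_(a in A) #|[set b in sigma | (b < a)%N]|)%N.
Proof.
rewrite inversions_cat !inversions_sorted ?enum_sorted // add0n big_enum.
apply: eq_bigr => a _; rewrite -sum1_count big_enum_cond -sum1_card.
by apply: eq_bigl => b; rewrite !inE.
Qed.
End Inv.

Section Comb.
Variables (n m : nat).

Definition inLn (a : 'I_n -> nat) (tau : {set 'I_m}) (S : {set 'I_n * 'I_m}) : bool :=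
  [exists r : {ffun 'I_m -> 'I_n},
    [&& S == [set (r j, j) | j in tau],
        [forall j in tau, a (r j) != 0%N]
      & [forall i, #|[set j in tau | r j == i]| == a i]]].

Lemma mem_graph (r : 'I_m -> 'I_n) (A : {set 'I_m}) (p1 : 'I_n) (p2 : 'I_m) :
  ((p1, p2) \in [set (r u, u) | u in A]) = (p2 \in A) && (p1 == r p2).
Proof.
apply/imsetP/andP => [[u Hu [-> ->]] | [H1 /eqP ->]]; first by rewrite eqxx.
by exists p2.
Qed.

Lemma card_split (tau : {set 'I_m}) (P : pred 'I_m) t : t \in tau ->
  #|[set u in tau | P u]| = (P t + #|[set u in tau :\ t | P u]|)%N.
Proof.
move=> Ht; rewrite (cardsD1 t) !inE Ht /=; congr addn.
by apply: eq_card => u; rewrite !inE andbA.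
Qed.

Lemma inL_add (a : 'I_n -> nat) (tau : {set 'I_m}) (S : {set 'I_n * 'I_m}) (i : 'I_n) (j : 'I_m) :
  ((i, j) \notin S) && inLn a tau ((i, j) |: S) =
  [&& j \in tau, (0 < a i)%N & inLn (fun k => (a k - (k == i))%N) (tau :\ j) S].
Proof.
apply/idP/idP.
- case/andP => HnS /existsP [r /and3P [/eqP HT /forall_inP Hnz /forallP Hc]].
  have : (i, j) \in [set (r u, u) | u in tau] by rewrite -HT setU11.
  rewrite mem_graph => /andP [Hj /eqP Ei]; subst i.
  rewrite Hj lt0n Hnz //=; apply/existsP; exists r; apply/and3P; split.
  + rewrite -(setU1K HnS) HT; apply/eqP/setP => [[q1 q2]].
    rewrite !inE !mem_graph xpair_eqE.
    case: (eqVneq q2 j) => [-> | Hq] /=; rewrite ?in_setD1 ?eqxx ?Hq ?andbF //=; try by case: (q1 == r j); rewrite /= ?andbF.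
  + apply/forall_inP => u; rewrite !inE => /andP [Hut Hu].
    case: (eqVneq (r u) (r j)) => [Er | Er] /=; last by rewrite subn0 Hnz.
    have H2 : (1 < #|[set v in tau | r v == r j]|)%N.
      apply: (@leq_trans #|[set u; j]|); first by rewrite cards2 Hut.
      by apply: subset_leq_card; apply/subsetP => v; rewrite !inE => /orP [] /eqP ->; rewrite ?Er eqxx ?Hu ?Hj.
    by rewrite (eqP (Hc (r j))) in H2; rewrite Er /= -lt0n subn_gt0.
  + apply/forallP => k; have := eqP (Hc k); rewrite (card_split _ Hj) => <-; rewrite [k == r j]eq_sym.
    by case: (r j == k); rewrite /= ?add1n ?add0n ?subn1 ?subn0.
- case/and3P => Hj Hai /existsP [r' /and3P [/eqP HS /forall_inP Hnz /forallP Hc]].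
  rewrite HS mem_graph !inE eqxx /=.
  apply/existsP; exists [ffun u => if u == j then i else r' u]; apply/and3P; split.
  + apply/eqP/setP => [[q1 q2]]; rewrite in_setU1 !mem_graph !inE ffunE xpair_eqE.
    by case: (eqVneq q2 j) => [-> | Hq] /=; rewrite ?andbT ?andbF ?Hj ?orbF.
  + apply/forall_inP => u Hu; rewrite ffunE.
    case: (eqVneq u j) => [_ | Hne]; first by rewrite -lt0n.
    have := Hnz u; rewrite !inE Hne Hu => /(_ isT).
    by apply: contra => /eqP ->.
  + apply/forallP => k; rewrite (card_split _ Hj) ffunE eqxx.
    have -> : #|[set u in tau :\ j | [ffun u => if u == j then i else r' u] u == k]|
            = #|[set u in tau :\ j | r' u == k]|.
      by apply: eq_card => u; rewrite !inE ffunE; case: (eqVneq u j).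
    rewrite (eqP (Hc k)) eq_sym; case: (eqVneq k i) => [-> | _] /=.
      by rewrite add1n subn1 prednK.
    by rewrite subn0.
Qed.

Lemma inL_sign (a : 'I_n -> nat) (tau : {set 'I_m}) (T : {set 'I_n * 'I_m}) (i : 'I_n) (j : 'I_m) : inLn a tau T -> (i, j) \in T ->
  #|[set q in T | pairlt q (i, j)]| = #|[set u in tau | (u < j)%N]|.
Proof.
case/existsP => r /and3P [/eqP HT _ _]; rewrite HT mem_graph => /andP [Hj /eqP ->].
rewrite -(card_imset _ (f := fun u => (r u, u))); last by move=> u v [].
apply: eq_card => [[q1 q2]]; rewrite !inE !mem_graph !inE /pairlt /=.
case: (eqVneq q1 (r q2)) => [-> | ]; rewrite ?andbT ?andbF //.
case: (eqVneq q2 j) => [-> | _]; rewrite ?ltnn ?ltnn //= ?orbF //.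
Qed.

Lemma inL_KU (a : 'I_n -> nat) (tau : {set 'I_m}) (T : {set 'I_n * 'I_m}) : inLn a tau T ->
  #|T| = #|tau| /\ (forall p, p \in T -> p.2 \in tau).
Proof.
case/existsP => r /and3P [/eqP HT _ _]; rewrite HT; split.
  by rewrite card_imset // => u v [].
by move=> [p1 p2]; rewrite mem_graph => /andP [].
Qed.
End Comb.

Lemma sum_sig (R : nmodType) (T : finType) (P : pred T) (F : T -> R) :
  \sum_(u : {x : T | P x}) F (val u) = \sum_(x | P x) F x.
Proof. by rewrite (big_sub (fun x => P x)). Qed.

Section Key.
Variables (R : comNzRingType) (n m : nat) (x : 'I_n -> 'I_m -> R) (sigma : {set 'I_m}).

Definition Kraw (T S0 : {set 'I_n * 'I_m}) : R :=
  \sum_(p in T) (if S0 == T :\ p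
                 then (-1) ^+ #|[set q in T | pairlt q p]| * x p.1 p.2 else 0).

Definition Qraw l (p : {ffun 'I_n -> 'I_l.+1} * {set 'I_m}) (T0 : {set 'I_n * 'I_m}) : R :=
  if sigma \subset p.2 then
    @wedge_sign m R (enum (p.2 :\: sigma) ++ enum sigma)
      * (@in_L n m l p.1 (p.2 :\: sigma) T0)%:R
  else 0.

Definition Draw l (p : {ffun 'I_n -> 'I_l.+1} * {set 'I_m})
  (c : {ffun 'I_n -> 'I_l.-1.+1} * {set 'I_m}) : R :=
  \sum_(i < n) \sum_(j in p.2)
      if [&& (0 < p.1 i)%N,
             [forall k, (c.1 k : nat) == (p.1 k - (k == i))%N]
           & c.2 == p.2 :\ j]
      then (-1) ^+ #|[set r in p.2 | (r < j)%N]| * x i j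
      else 0.

Definition KUP l (T : {set 'I_n * 'I_m}) : bool :=
  (#|T| == l) && [forall p in T, p.2 \notin sigma].

Definition ENP l (p : {ffun 'I_n -> 'I_l.+1} * {set 'I_m}) : bool :=
  ((\sum_(i < n) (p.1 i : nat))%N == l) && (#|p.2| == n + l)%N.

Lemma inLn_ext (f g : 'I_n -> nat) tau S : (forall k, f k = g k) ->
  @inLn n m f tau S = inLn g tau S.
Proof.
move=> E; apply: eq_existsb => r; congr [&& _, _ & _].
  by apply: eq_forallb => j; rewrite E.
by apply: eq_forallb => i; rewrite E.
Qed.

Lemma card_lt_split (rho : {set 'I_m}) (j : 'I_m) : sigma \subset rho ->
  #|[set r in rho | (r < j)%N]| =
  (#|[set u in rho :\: sigma | (u < j)%N]| + #|[set b in sigma | (b < j)%N]|)%N.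
Proof.
move=> Hs; rewrite -(cardsID sigma) addnC; congr addn; apply: eq_card => u; rewrite !inE.
  by rewrite andbA.
case: (boolP (u \in sigma)) => Hu; rewrite ?andbT ?andbF //=.
by rewrite (subsetP Hs).
Qed.

Lemma sign_lemma (rho : {set 'I_m}) (j : 'I_m) : sigma \subset rho -> j \in rho :\: sigma ->
  (-1) ^+ #|[set r in rho | (r < j)%N]| *
    @wedge_sign m R (enum ((rho :\: sigma) :\ j) ++ enum sigma)
  = @wedge_sign m R (enum (rho :\: sigma) ++ enum sigma)
    * (-1) ^+ #|[set u in rho :\: sigma | (u < j)%N]|.
Proof.
move=> Hs Hj; rewrite /wedge_sign !inv_setE (big_setD1 j Hj) /= (card_lt_split _ Hs).
by rewrite -!exprD; congr (_ ^+ _); rewrite [RHS]addnC addnA.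
Qed.

Lemma key_raw l (Hsig : #|sigma| = n) (Hl : (0 < l)%N) (a : {ffun 'I_n -> 'I_l.+1})
  (rho : {set 'I_m}) (Ha : (\sum_i (a i : nat))%N = l) (Hrho : #|rho| = (n + l)%N)
  (S0 : {set 'I_n * 'I_m}) :
  \sum_(T0 | KUP l T0) Qraw (a, rho) T0 * Kraw T0 S0
  = \sum_(c | @ENP l.-1 c) Draw (a, rho) c * Qraw c S0.
Proof.
case: (boolP (sigma \subset rho)) => Hs; last first.
  transitivity (0 : R).
    by apply: big1 => T0 _; rewrite /Qraw /= (negbTE Hs) mul0r.
  symmetry; apply: big1 => c _; rewrite /Draw /= big_distrl; apply: big1 => i _.
  rewrite big_distrl; apply: big1 => j Hj /=.
  case: ifP => [/and3P [_ _ /eqP E] | _]; last by rewrite mul0r.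
  rewrite /Qraw E ifF ?mulr0 //; apply/negP => H; move/negP: Hs; apply.
  by apply: subset_trans H _; exact: subD1set.
have Htau : #|rho :\: sigma| = l.
  by rewrite cardsD (setIidPr Hs) Hrho Hsig; lia.
pose a' := fun i => (a i : nat).
pose g := fun i j => if (0 < a' i)%N && inLn (fun k => (a' k - (k == i))%N) ((rho :\: sigma) :\ j) S0
   then (-1) ^+ #|[set u in rho :\: sigma | (u < j)%N]| * x i j else 0.
have inLE : forall tau T0, @in_L n m l a tau T0 = inLn a' tau T0 by [].
transitivity (@wedge_sign m R (enum (rho :\: sigma) ++ enum sigma) * \sum_i \sum_(j in rho :\: sigma) g i j).
- rewrite big_mkcond /=.
  transitivity (\sum_T0 @wedge_sign m R (enum (rho :\: sigma) ++ enum sigma)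
                  * ((inLn a' (rho :\: sigma) T0)%:R * Kraw T0 S0)).
    apply: eq_bigr => T0 _; rewrite /Qraw /= Hs inLE.
    case: ifP => HP; first by rewrite mulrA.
    case: (boolP (inLn a' (rho :\: sigma) T0)) => HL; last by rewrite mul0r mulr0.
    exfalso; move/negbT: HP; rewrite /KUP; have [Hc Hcol] := inL_KU HL.
    rewrite Hc Htau eqxx /=; move/negP; apply; apply/forall_inP => p /Hcol.
    by rewrite in_setD => /andP [].
  rewrite -big_distrr /=; congr (_ * _).
  transitivity (\sum_(T0 : {set 'I_n * 'I_m}) \sum_(p : 'I_n * 'I_m) (if p \in T0 then (inLn a' (rho :\: sigma) T0)%:R *
     (if S0 == T0 :\ p then (-1) ^+ #|[set q in T0 | pairlt q p]| * x p.1 p.2 else 0) else 0)).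
    by apply: eq_bigr => T0 _; rewrite /Kraw big_distrr /= big_mkcond.
  rewrite exchange_big /=.
  transitivity (\sum_(p : 'I_n * 'I_m) (if (p \notin S0) && inLn a' (rho :\: sigma) (p |: S0)
      then (-1) ^+ #|[set q in p |: S0 | pairlt q p]| * x p.1 p.2 else 0)).
    apply: eq_bigr => p _; rewrite (bigD1 (p |: S0)) //= big1 ?addr0.
      rewrite setU11; case: (boolP (p \in S0)) => HpS /=.
        rewrite ifF ?mulr0 //; apply/eqP => E.
        by move: HpS; rewrite {1}E !inE eqxx.
      rewrite setU1K // eqxx.
      by case: (inLn a' (rho :\: sigma) (p |: S0)); rewrite ?mul1r ?mul0r.
    move=> T0 HT0; case: ifP => // HpT.
    case: eqP => [E | _]; last by rewrite mulr0.
    by move: HT0; rewrite E setD1K ?eqxx.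
  rewrite [RHS](eq_bigr (fun i => \sum_j if j \in rho :\: sigma then g i j else 0)); last first.
    by move=> i _; rewrite big_mkcond.
  rewrite pair_bigA /=; apply: eq_bigr => [[i j]] _ /=.
  rewrite inL_add /g.
  case: (boolP (j \in rho :\: sigma)) => Hj //=.
  case: ifP => H //.
  have : [&& j \in rho :\: sigma, (0 < a' i)%N
           & inLn (fun k => (a' k - (k == i))%N) ((rho :\: sigma) :\ j) S0] by rewrite Hj H.
  rewrite -inL_add => /andP [_ HL].
  by rewrite (inL_sign HL (setU11 _ _)).
- symmetry.
  pose cstar (i : 'I_n) (j : 'I_m) : {ffun 'I_n -> 'I_l.-1.+1} * {set 'I_m} :=
    ([ffun k => inord (a k - (k == i))], rho :\ j).
  have Hb : forall i k, (0 < a i)%N -> (a k - (k == i) < l.-1.+1)%N.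
    move=> i k Hai; have Hle := ltn_ord (a k).
    case: (eqVneq k i) => [E | Hki] /=; first by rewrite prednK //; move: Hle; case: (nat_of_ord (a k)) => [|y] /=; lia.
    have : (a k + a i <= \sum_t (a t : nat))%N.
      rewrite (bigD1 k) //= (bigD1 i) /=; last by rewrite eq_sym.
      by rewrite addnA leq_addr.
    by rewrite Ha; lia.
  transitivity (\sum_i \sum_(j in rho) (if (0 < a i)%N then
     (-1) ^+ #|[set r in rho | (r < j)%N]| * x i j * Qraw (cstar i j) S0 else 0)).
    rewrite (eq_bigr (fun c : {ffun 'I_n -> 'I_l.-1.+1} * {set 'I_m} => \sum_i \sum_(j in rho)
       (if [&& (0 < a i)%N, [forall k, ((c.1 k : nat) == (a k - (k == i))%N)] & c.2 == rho :\ j]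
        then (-1) ^+ #|[set r in rho | (r < j)%N]| * x i j * Qraw c S0 else 0))); last first.
      move=> c _; rewrite /Draw big_distrl; apply: eq_bigr => i _; rewrite big_distrl.
      by apply: eq_bigr => j _ /=; case: ifP; rewrite ?mul0r.
    rewrite exchange_big; apply: eq_bigr => i _; rewrite exchange_big; apply: eq_bigr => j Hj /=.
    case: (ltnP 0 (a i)) => Hai; last first.
      by apply: big1.
    have HENP : @ENP l.-1 (cstar i j).
      apply/andP; split; apply/eqP.
        rewrite /= (eq_bigr (fun k => (a k - (k == i))%N)); last first.
          by move=> k _; rewrite ffunE (inordK (Hb _ _ Hai)).
        rewrite (bigD1 i) //= eqxx; rewrite (bigD1 i) //= in Ha.
        rewrite (eq_bigr (fun k => (a k : nat))) => [|k /negbTE ->]; last by rewrite subn0.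
        by rewrite /= addnBAC // Ha subn1.
      move: Hrho; rewrite /cstar /= (cardsD1 j rho) Hj add1n => H; apply: succn_inj; rewrite H -addnS prednK //.
    rewrite (bigD1 (cstar i j)) //= big1 ?addr0.
      rewrite ifT // eqxx andbT /=; apply/forallP => k.
      by rewrite ffunE (inordK (Hb _ _ Hai)).
    move=> c /andP [_ Hne]; rewrite ifF //; apply/negbTE; apply: contra Hne.
    case/andP => /forallP Hc /eqP Hc2; apply/eqP.
    case: c Hc Hc2 => f R' /= Hc ->; rewrite /cstar; congr (_, _); apply/ffunP => k; apply: val_inj.
    by rewrite ffunE /= (inordK (Hb _ _ Hai)); exact/eqP.
  rewrite big_distrr /=; apply: eq_bigr => i _.
  rewrite big_distrr /= big_mkcond [RHS]big_mkcond /=; apply: eq_bigr => j _.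
  case: (boolP (j \in rho :\: sigma)) => Hjt.
    have Hjr : j \in rho by move: Hjt; rewrite in_setD => /andP [].
    rewrite Hjr /Qraw /=.
    have -> : sigma \subset rho :\ j.
      apply/subsetP => y Hy; rewrite !inE (subsetP Hs) // andbT.
      by apply/eqP => E; move: Hjt; rewrite -E in_setD Hy.
    have -> : (rho :\ j) :\: sigma = (rho :\: sigma) :\ j.
      by apply/setP => y; rewrite !inE andbCA.
    rewrite /g /a' /=.
    case: (ltnP 0 (a i)) => Hai /=; last first.
      by rewrite mulr0.
    rewrite (_ : @in_L n m l.-1 _ _ _ = inLn (fun k => (a k - (k == i))%N) ((rho :\: sigma) :\ j) S0); last first.
      by apply: inLn_ext => k; rewrite ffunE (inordK (Hb _ _ Hai)).
    case: (inLn (fun k => (a k - (k == i))%N) ((rho :\: sigma) :\ j) S0) => /=; last by rewrite mulr0n !mulr0.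
    by rewrite mulr1n mulr1 mulrAC sign_lemma // mulrA.
  case: (boolP (j \in rho)) => Hjr //=.
  have Hjs : j \in sigma by move: Hjt; rewrite in_setD Hjr andbT negbK.
  rewrite /Qraw /=.
  have -> : sigma \subset rho :\ j = false.
    by apply/negbTE/negP => /subsetP /(_ j Hjs); rewrite !inE eqxx.
  by rewrite mulr0; case: ifP.
Qed.
End Key.

Lemma key (R : comNzRingType) (n m : nat) (x : 'I_n -> 'I_m -> R) (sigma : {set 'I_m}) (l : nat)
  (Hsig : #|sigma| = n) (Hl : (0 < l)%N) (b : ENbasis n m l) (S : @KUbasis n m sigma l.-1) :
  \sum_(T : @KUbasis n m sigma l) @qmap n m R sigma l b T * @koszul n m R x sigma l T S
  = \sum_(c : ENbasis n m l.-1) @ENdiff n m R x l b c * @qmap n m R sigma l.-1 c S.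
Proof.
case: b => [[a rho] Hb]; have /andP [/eqP Ha /eqP Hrho] := Hb; case: S => S0 HS0.
transitivity (\sum_(T0 | @KUP n m sigma l T0) @Qraw R n m sigma l (a, rho) T0 * @Kraw R n m x T0 S0).
  exact: (sum_sig (@KUP n m sigma l) (fun T0 => @Qraw R n m sigma l (a, rho) T0 * @Kraw R n m x T0 S0)).
rewrite (@key_raw R n m x sigma l Hsig Hl a rho Ha Hrho S0).
symmetry.
exact: (sum_sig (@ENP n m l.-1) (fun c => @Draw R n m x l (a, rho) c * @Qraw R n m sigma l.-1 c S0)).
Qed.

Theorem lemma4p12 (k : fieldType) (n m : nat) (sigma : {set 'I_m}) (l : nat) :
  (n <= m)%N -> #|sigma| = n -> (2 <= l)%N ->
  forall (v : ENbasis n m l -> {mpoly k[n * m]}) (S : @KUbasis n m sigma l.-1),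
    lin (@koszul n m _ (@xgen k n m) sigma l)
        (lin (@qmap n m {mpoly k[n * m]} sigma l) v) S
    = lin (@qmap n m {mpoly k[n * m]} sigma l.-1)
          (lin (@ENdiff n m _ (@xgen k n m) l) v) S.
Proof.
move=> Hnm Hsig Hl v S; rewrite /lin.
have Hl0 : (0 < l)%N by apply: leq_trans Hl.
transitivity (\sum_b v b * \sum_(T : @KUbasis n m sigma l)
   @qmap n m _ sigma l b T * @koszul n m _ (@xgen k n m) sigma l T S).
  rewrite (eq_bigr (fun T => \sum_b v b * @qmap n m _ sigma l b T
                       * @koszul n m _ (@xgen k n m) sigma l T S)); last first.
    by move=> T _; rewrite big_distrl.
  rewrite exchange_big; apply: eq_bigr => b _; rewrite big_distrr.
  by apply: eq_bigr => T _; rewrite -mulrA.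
transitivity (\sum_b v b * \sum_(c : ENbasis n m l.-1)
   @ENdiff n m _ (@xgen k n m) l b c * @qmap n m _ sigma l.-1 c S); last first.
  symmetry.
  rewrite (eq_bigr (fun c => \sum_b v b * @ENdiff n m _ (@xgen k n m) l b c
                       * @qmap n m _ sigma l.-1 c S)); last first.
    by move=> c _; rewrite big_distrl.
  rewrite exchange_big; apply: eq_bigr => b _; rewrite big_distrr.
  by apply: eq_bigr => c _; rewrite -mulrA.
by apply: eq_bigr => b _; rewrite key.
Qed.
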